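(* Let $K$ be a field with a derivation $\partial$, and let $K[D]$ be the ring of ordinary linear differential operators over $K$ ($D\circ a=aD+\partial(a)$ for $a\in K$). Let $L\in K[D]$ have symbol $\operatorname{Sym}_L=S_1S_2$, where $S_1,S_2\in K[X]$ are homogeneous of degrees $d_1,d_2$. Then every partial factorization of $L$ of order $\max(d_1,d_2)-1$ and type $(S_1)(S_2)$ has at most one extension to a factorization $L=F_1'\circ F_2'$ of type $(S_1)(S_2)$.
   Context: For $L=\sum_{j\le d}a_jD^j$ with $a_j\in K$ and $a_d\neq0$, $\operatorname{ord}(L)=d$ (with $\operatorname{ord}(0)=-\infty$) and $\operatorname{Sym}_L=a_dX^d$. A factorization of type $(S_1)(S_2)$ is $L=F_1\circ F_2$ with $\operatorname{Sym}_{F_i}=S_i$. For $t\in\{0,\dots,\operatorname{ord}L\}$, a partial factorization of order $t$ and type $(S_1)(S_2)$ is a composition $F_1\circ F_2$ with $\operatorname{Sym}_{F_i}=S_i$ and $\operatorname{ord}(L-F_1\circ F_2)<t$. A partial factorization $F_1'\circ F_2'$ of order $t'<t$ is an extension of one $F_1\circ F_2$ of order $t$ if $\operatorname{ord}(F_i-F_i')<t-(d-d_i)$ for $i=1,2$, where $d=\operatorname{ord}L$. A factorization is a partial factorization of order $0$. *)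

(* Defs.v *)
From HB Require Import structures.
From mathcomp Require Import all_boot all_order all_algebra.
Set Implicit Arguments. Unset Strict Implicit. Unset Printing Implicit Defensive.
Import Order.TTheory GRing.Theory Num.Theory.
Local Open Scope ring_scope.

(* Operators L = \sum_j a_j D^j in K[D] are represented by their coefficient
   sequence, i.e. by the polynomial \sum_j a_j 'X^j : {poly K}.  The additive
   structure of K[D] is that of {poly K}; the multiplication (composition) is
   the twisted one, given by the Leibniz rule
     D^i o b = \sum_(k <= i) 'C(i,k) der^k(b) D^(i-k),
   which is forced by D o a = a D + der a. *)

Section DiffOps.
Variable K : fieldType.

Definition is_derivation (der : K -> K) : Prop :=
  (forall a b, der (a + b) = der a + der b) /\
  (forall a b, der (a * b) = der a * b + a * der b).

Definition dcomp (der : K -> K) (A B : {poly K}) : {poly K} :=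
  \sum_(i < size A) \sum_(j < size B) \sum_(k < i.+1)
     (A`_i * ('C(i, k))%:R * iter k der B`_j) *: 'X^(i - k + j).

(* ord L = size L - 1, with ord 0 = -oo; as an extended integer. *)
(* ord_lt L t  <->  ord L < t   (t : int) *)
Definition ord_lt (L : {poly K}) (t : int) : bool :=
  (L == 0) || ((size L)%:Z <= t).

(* ord L as an integer, meaningful for L != 0 *)
Definition ordz (L : {poly K}) : int := ((size L).-1)%:Z.

Definition dsym (L : {poly K}) : {poly K} := lead_coef L *: 'X^((size L).-1).

Definition homog_of_deg (S : {poly K}) (d : nat) : Prop :=
  exists2 c : K, c != 0 & S = c *: 'X^d.

Definition partial_fact (der : K -> K) (L S1 S2 : {poly K}) (t : int)
    (F1 F2 : {poly K}) : Prop :=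
  [/\ 0 <= t <= ordz L, dsym F1 = S1, dsym F2 = S2
    & ord_lt (L - dcomp der F1 F2) t].

Definition factorization (der : K -> K) (L S1 S2 F1 F2 : {poly K}) : Prop :=
  partial_fact der L S1 S2 0 F1 F2.

(* (G1,G2) of order t' is an extension of (F1,F2) of order t; here
   d = ord L and d_i = ord F_i = deg S_i. *)
Definition extension (der : K -> K) (L S1 S2 : {poly K})
    (t : int) (F1 F2 : {poly K}) (t' : int) (G1 G2 : {poly K}) : Prop :=
  [/\ partial_fact der L S1 S2 t F1 F2, t' < t,
      partial_fact der L S1 S2 t' G1 G2,
      ord_lt (F1 - G1) (t - (ordz L - ordz F1))
    & ord_lt (F2 - G2) (t - (ordz L - ordz F2))].

End DiffOps.

(* Main.v *)
Require Import Defs.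
From HB Require Import structures.
From mathcomp Require Import all_boot all_order all_algebra.
From mathcomp Require Import zify.
Set Warnings "-all".
Set Implicit Arguments. Unset Strict Implicit. Unset Printing Implicit Defensive.
Import Order.TTheory GRing.Theory Num.Theory.
Local Open Scope ring_scope.

Section H.
Variable K : fieldType.
Variable der : K -> K.
Hypothesis Hd : is_derivation der.

Lemma der0 : der 0 = 0.
Proof.
case: Hd => Ha _. have := Ha 0 0. rewrite addr0 -{1}[der 0]addr0.
by move/addrI.
Qed.

Lemma derB a b : der (a - b) = der a - der b.
Proof.
case: Hd => Ha _. by rewrite -{2}(subrK b a) (Ha (a - b) b) addrK.
Qed.

Lemma iter0 k : iter k der 0 = 0.
Proof. by elim: k => //= k ->; rewrite der0. Qed.

Lemma iterB k a b : iter k der (a - b) = iter k der a - iter k der b.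
Proof. by elim: k => //= k ->; rewrite derB. Qed.

Definition dterm (A B : {poly K}) (i j k : nat) : {poly K} :=
  (A`_i * ('C(i, k))%:R * iter k der B`_j) *: 'X^(i - k + j).

Lemma dcomp_pad (A B : {poly K}) nA nB : (size A <= nA)%N -> (size B <= nB)%N ->
  dcomp der A B = \sum_(i < nA) \sum_(j < nB) \sum_(k < i.+1) dterm A B i j k.
Proof.
move=> hA hB; rewrite /dcomp (big_ord_widen nA (fun i => \sum_(j < size B)
  \sum_(k < i.+1) dterm A B i j k) hA) big_mkcond /=.
apply: eq_bigr => i _; case: ifP => hi; last first.
  rewrite big1 // => j _; rewrite big1 // => k _.
  by rewrite /dterm nth_default ?mul0r ?scale0r // leqNgt hi.
rewrite (big_ord_widen nB (fun j => \sum_(k < i.+1) dterm A B i j k) hB).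
rewrite big_mkcond /=; apply: eq_bigr => j _; case: ifP => hj //.
rewrite big1 // => k _.
by rewrite /dterm [B`_j]nth_default ?iter0 ?mulr0 ?scale0r // leqNgt hj.
Qed.

Lemma dcompBl A C B : dcomp der (A - C) B = dcomp der A B - dcomp der C B.
Proof.
set n := maxn (size A) (size C).
have hA : (size A <= n)%N by rewrite leq_maxl.
have hC : (size C <= n)%N by rewrite leq_maxr.
have hAC : (size (A - C)%R <= n)%N by rewrite (leq_trans (size_add _ _)) // size_opp geq_max hA hC.
rewrite (dcomp_pad hAC (leqnn _)) (dcomp_pad hA (leqnn _)) (dcomp_pad hC (leqnn _)) -sumrB; apply: eq_bigr => i _.
rewrite -sumrB; apply: eq_bigr => j _; rewrite -sumrB; apply: eq_bigr => k _.
by rewrite /dterm coefB -!scalerBl !mulrBl.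
Qed.

Lemma dcompBr A B C : dcomp der A (B - C) = dcomp der A B - dcomp der A C.
Proof.
set n := maxn (size B) (size C).
have hB : (size B <= n)%N by rewrite leq_maxl.
have hC : (size C <= n)%N by rewrite leq_maxr.
have hBC : (size (B - C)%R <= n)%N by rewrite (leq_trans (size_add _ _)) // size_opp geq_max hB hC.
rewrite (dcomp_pad (leqnn _) hBC) (dcomp_pad (leqnn _) hB) (dcomp_pad (leqnn _) hC) -sumrB; apply: eq_bigr => i _.
rewrite -sumrB; apply: eq_bigr => j _; rewrite -sumrB; apply: eq_bigr => k _.
by rewrite /dterm coefB iterB -!scalerBl !mulrBr.
Qed.


Lemma dcomp_lead (A B : {poly K}) m n : size A = m.+1 -> size B = n.+1 ->
  (dcomp der A B)`_(m + n) = A`_m * B`_n.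
Proof.
move=> sA sB; rewrite /dcomp sA sB coef_sum big_ord_recr /=.
rewrite big1 ?add0r => [|i _]; last first.
  rewrite coef_sum big1 // => j _; rewrite coef_sum big1 // => k _.
  rewrite coefZ coefXn.
  have /negPf -> : (m + n)%N != (i - k + j)%N.
    apply/eqP; have := ltn_ord i; have := ltn_ord j; have := ltn_ord k; lia.
  by rewrite mulr0.
rewrite coef_sum big_ord_recr /= big1 ?add0r => [|j _]; last first.
  rewrite coef_sum big1 // => k _; rewrite coefZ coefXn.
  have /negPf -> : (m + n)%N != (m - k + j)%N.
    apply/eqP; have := ltn_ord j; have := ltn_ord k; lia.
  by rewrite mulr0.
rewrite coef_sum big_ord_recl /= big1 ?addr0 => [|k _]; last first.
  rewrite coefZ coefXn.
  have /negPf -> : (m + n)%N != (m - bump 0 k + n)%N.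
    apply/eqP; have := ltn_ord k; rewrite /bump /=; lia.
  by rewrite mulr0.
by rewrite coefZ coefXn subn0 eqxx bin0 mulr1 mulr1.
Qed.

Lemma dcomp_neq0 (A B : {poly K}) : A != 0 -> B != 0 -> dcomp der A B != 0.
Proof.
move=> nA nB.
have : size A != 0%N by rewrite size_poly_eq0.
have : size B != 0%N by rewrite size_poly_eq0.
case sB: (size B) => [|n] // _; case sA: (size A) => [|m] // _.
apply/eqP => h; have := dcomp_lead sA sB; rewrite h coef0 => /esym/eqP.
rewrite mulf_eq0 => /orP[] /eqP.
  have : lead_coef A != 0 by rewrite lead_coef_eq0 -size_poly_eq0 sA.
  by rewrite lead_coefE sA /= => /eqP.
have : lead_coef B != 0 by rewrite lead_coef_eq0 -size_poly_eq0 sB.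
by rewrite lead_coefE sB /= => /eqP.
Qed.

Lemma dsym_size (P : {poly K}) c d : dsym P = c *: 'X^d -> c != 0 -> size P = d.+1.
Proof.
move=> h c0; have := congr1 (fun p : {poly K} => size p) h; rewrite /= /dsym.
have [->|P0] := eqVneq P 0.
  by rewrite lead_coef0 scale0r size_poly0 size_scale // size_polyXn.
have lc : lead_coef P != 0 by rewrite lead_coef_eq0.
rewrite (size_scale _ lc) (size_scale _ c0) !size_polyXn => [[<-]].
by rewrite prednK // lt0n size_poly_eq0.
Qed.

Lemma ord_lt_neg (X : {poly K}) (t : int) : ord_lt X t -> t <= 0 -> X = 0.
Proof.
rewrite /ord_lt => /orP[/eqP //|h1 h2].
have := le_trans h1 h2; rewrite lez_nat leqn0 => /eqP /eqP; by rewrite size_poly_eq0 => /eqP.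
Qed.
End H.

Theorem mainTheorem3 (K : fieldType) (der : K -> K) (Hder : is_derivation der)
    (L S1 S2 : {poly K}) (d1 d2 : nat) :
  homog_of_deg S1 d1 -> homog_of_deg S2 d2 -> dsym L = S1 * S2 ->
  forall F1 F2 : {poly K},
    partial_fact der L S1 S2 ((maxn d1 d2)%:Z - 1) F1 F2 ->
  forall G1 G2 H1 H2 : {poly K},
    factorization der L S1 S2 G1 G2 ->
    extension der L S1 S2 ((maxn d1 d2)%:Z - 1) F1 F2 0 G1 G2 ->
    factorization der L S1 S2 H1 H2 ->
    extension der L S1 S2 ((maxn d1 d2)%:Z - 1) F1 F2 0 H1 H2 ->
    G1 = H1 /\ G2 = H2.
Proof.
move=> [c1 c1n ->] [c2 c2n ->] hL F1 F2 _ G1 G2 H1 H2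
  [_ dG1 dG2 oG] [[_ dF1 dF2 _] _ _ eG1 eG2]
  [_ dH1 dH2 oH] [_ _ _ eH1 eH2].
have sF1 := dsym_size dF1 c1n.
have sF2 := dsym_size dF2 c2n.
have sL : size L = (d1 + d2).+1.
  apply: (dsym_size (c := c1 * c2)); last exact: mulf_neq0.
  by rewrite hL -scalerAl -scalerAr scalerA exprD.
have LG : L = dcomp der G1 G2 by apply/eqP; rewrite -subr_eq0; apply/eqP; exact: (ord_lt_neg oG).
have LH : L = dcomp der H1 H2 by apply/eqP; rewrite -subr_eq0; apply/eqP; exact: (ord_lt_neg oH).
rewrite /ordz sL sF1 sF2 /= in eG1 eG2 eH1 eH2.
have [le21|lt12] := leqP d2 d1.
  have neg : (maxn d1 d2)%:Z - 1 - ((d1 + d2)%N%:Z - d2%:Z) <= 0 :> int by lia.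
  have e1 := ord_lt_neg eG2 neg; have e2 := ord_lt_neg eH2 neg.
  move/eqP: e1; move/eqP: e2; rewrite !subr_eq0 => /eqP e2 /eqP e1.
  rewrite -e1 -e2; split => //.
  apply/eqP; rewrite -subr_eq0; apply/negPn/negP => hne.
  have F20 : F2 != 0 by rewrite -size_poly_eq0 sF2.
  have eq : dcomp der G1 F2 = dcomp der H1 F2 by rewrite {1}e1 -LG e2 -LH.
  have := @dcomp_neq0 _ der _ _ hne F20; rewrite (dcompBl Hder) eq subrr.
  by rewrite eqxx.
have neg : (maxn d1 d2)%:Z - 1 - ((d1 + d2)%N%:Z - d1%:Z) <= 0 :> int by lia.
have e1 := ord_lt_neg eG1 neg; have e2 := ord_lt_neg eH1 neg.
move/eqP: e1; move/eqP: e2; rewrite !subr_eq0 => /eqP e2 /eqP e1.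
rewrite -e1 -e2; split => //.
apply/eqP; rewrite -subr_eq0; apply/negPn/negP => hne.
have F10 : F1 != 0 by rewrite -size_poly_eq0 sF1.
have eq : dcomp der F1 G2 = dcomp der F1 H2 by rewrite {1}e1 -LG e2 -LH.
have := @dcomp_neq0 _ der _ _ F10 hne; rewrite (dcompBr Hder) eq subrr.
by rewrite eqxx.
Qed.
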